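(* Fix a basis $\{b_1,\ldots,b_d\}$ of $\mathbb{R}^d$. For each $I\subseteq [d]=\{1,\dots,d\}$, let $p_I:\mathbb{R}^d\to \mathbb{R}^I$ be the projection onto the span of $\{b_i\}_{i\in I}$ along the given basis (i.e. $p_I(\sum_i x_ib_i)=\sum_{i\in I}x_ib_i$). Then, for any non-empty finite subsets $A,B$ of $\mathbb{R}^d$, $$|A+B|\geq \left(|A|^{1/d}+|B|^{1/d}\right)^d-\sum_{I\subsetneq [d]}|p_I(A+B)|.$$ *)

(* Defs.v *)
From HB Require Import structures.
From mathcomp Require Import all_boot all_order all_algebra finmap.
From mathcomp Require Import all_classical all_reals all_analysis.
Set Implicit Arguments. Unset Strict Implicit. Unset Printing Implicit Defensive.
Import Order.TTheory GRing.Theory Num.Theory.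
Local Open Scope ring_scope.

(* The basis {b_1..b_d} is given by the rows of an invertible matrix b.
   Coordinates of x in that basis: the row vector c with x = c *m b,
   i.e. c = x *m invmx b. *)
Definition coords {R : realType} {d : nat} (b : 'M[R]_d) (x : 'rV[R]_d)
  : 'rV[R]_d := x *m invmx b.

Definition projI {R : realType} {d : nat} (b : 'M[R]_d) (I : {set 'I_d})
  (x : 'rV[R]_d) : 'rV[R]_d :=
  (\row_i (if i \in I then coords b x 0 i else 0)) *m b.

Definition sumset {R : realType} {d : nat} (A B : {fset 'rV[R]_d})
  : {fset 'rV[R]_d} := [fset (a + b')%R | a in A, b' in B]%fset.

(* Main.v *)
Require Import Defs.
From HB Require Import structures.
From mathcomp Require Import all_boot all_order all_algebra finmap.
From mathcomp Require Import all_classical all_reals all_analysis.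
From mathcomp Require Import ring lra.
Set Implicit Arguments. Unset Strict Implicit. Unset Printing Implicit Defensive.
Import Order.TTheory GRing.Theory Num.Theory.
Local Open Scope ring_scope.

Section Jensen.
Variable R : realType.

Lemma powmono_prod (a c : R) n : 0 <= a -> 0 <= c -> 0 <= (a - c) * (a ^+ n - c ^+ n).
Proof.
move=> a0 c0; case: (lerP a c) => h.
- apply: mulr_le0; first by rewrite subr_le0.
  by rewrite subr_le0 lerXn2r // nnegrE.
- apply: mulr_ge0; first by rewrite subr_ge0 ltW.
  by rewrite subr_ge0 lerXn2r ?nnegrE // ltW.
Qed.

Lemma jensen_pow (l a c : R) n : 0 <= l <= 1 -> 0 <= a -> 0 <= c ->
  (l * a + (1 - l) * c) ^+ n <= l * a ^+ n + (1 - l) * c ^+ n.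
Proof.
move=> /andP[l0 l1] a0 c0; elim: n => [|n IH]; first by rewrite !expr0; lra.
rewrite exprS.
have hm : 0 <= l * a + (1 - l) * c by apply: addr_ge0; apply: mulr_ge0 => //; lra.
apply: le_trans (ler_wpM2l hm IH) _.
have := powmono_prod n a0 c0.
have hl : 0 <= l * (1 - l) by apply: mulr_ge0 => //; lra.
move=> /(mulr_ge0 hl).
rewrite !exprS.
set an := a ^+ n; set cn := c ^+ n => H.
rewrite -subr_ge0; apply: le_trans H _; rewrite le_eqVlt; apply/orP; left; apply/eqP.
ring.
Qed.
End Jensen.


Section H.
Variable R : realType.
Lemma holder2 (n : nat) (x y P Q s t : R) : 0 <= s -> 0 <= t -> 0 < P -> 0 < Q ->
  s ^+ n.+1 <= x * P ^+ n -> t ^+ n.+1 <= y * Q ^+ n ->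
  (s + t) ^+ n.+1 <= (x + y) * (P + Q) ^+ n.
Proof.
move=> s0 t0 P0 Q0 hs ht.
have PQ0 : 0 < P + Q by lra.
set l := P / (P + Q).
have l01 : 0 <= l <= 1.
  apply/andP; split; first by rewrite /l divr_ge0 ?ltW.
  by rewrite /l ler_pdivrMr // mul1r; lra.
have a0 : 0 <= s / P by apply: divr_ge0; lra.
have c0 : 0 <= t / Q by apply: divr_ge0; lra.
have J := jensen_pow n.+1 l01 a0 c0.
have e1 : l * (s / P) + (1 - l) * (t / Q) = (s + t) / (P + Q).
  by rewrite /l; field; rewrite !gt_eqF.

rewrite e1 expr_div_n in J.
have hPQ : 0 < (P + Q) ^+ n.+1 by rewrite exprn_gt0.
rewrite ler_pdivrMr // in J.
apply: le_trans J _.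
rewrite !expr_div_n.
have -> : (l * (s ^+ n.+1 / P ^+ n.+1) + (1 - l) * (t ^+ n.+1 / Q ^+ n.+1)) * (P + Q) ^+ n.+1
   = (s ^+ n.+1 / P ^+ n + t ^+ n.+1 / Q ^+ n) * (P + Q) ^+ n.
  rewrite /l !exprS; field.
  by rewrite !gt_eqF // ?exprn_gt0.
apply: ler_wpM2r; first by rewrite exprn_ge0 // ltW.
apply: lerD.
  by rewrite ler_pdivrMr ?exprn_gt0.
by rewrite ler_pdivrMr ?exprn_gt0.
Qed.
End H.



Section OneD.
Variable R : realType.

Definition sumR (X Y : {fset R}) : {fset R} := [fset (x + y)%R | x in X, y in Y]%fset.

Lemma sumRP (X Y : {fset R}) z : reflect (exists x y, [/\ x \in X, y \in Y & z = x + y]) (z \in sumR X Y).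
Proof.
apply: (iffP idP).
  by move=> /imfset2P [x xX [y yY ->]]; exists x, y.
by move=> [x [y [xX yY ->]]]; apply/imfset2P; exists x => //; exists y.
Qed.

Lemma sumRC X Y : sumR X Y = sumR Y X.
Proof.
apply/fsetP => z; apply/sumRP/sumRP => -[x [y [xX yY ->]]]; exists y, x; split => //; exact: addrC.
Qed.

Lemma sum_sub_le (A B : {fset R}) (F : R -> R) : (A `<=` B)%fset -> (forall x, x \in B -> 0 <= F x) ->
  \sum_(x <- A) F x <= \sum_(x <- B) F x.
Proof.
move=> AB F0; rewrite [X in _ <= X](@big_fsetID _ _ _ _ (mem A)) /=.
rewrite -[X in X <= _]addr0; apply: lerD.
  rewrite le_eqVlt; apply/orP; left; apply/eqP; apply: eq_fbigl => x.
  rewrite !inE /=; apply/idP/idP; first by move=> xA; rewrite xA (fsubsetP AB).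
  by case/andP.
rewrite big_seq; apply: sumr_ge0 => i; rewrite !inE /= => /andP[iB _]; exact: F0.
Qed.

End OneD.

Section OneD2.
Variable R : realType.

Lemma seq_max (s : seq R) : s != [::] -> exists2 a, a \in s & forall x, x \in s -> x <= a.
Proof.
elim: s => // a s IH _; case: (eqVneq s [::]) => [->|sn].
  by exists a; rewrite ?mem_seq1 // => x; rewrite mem_seq1 => /eqP ->.
have [b bs hb] := IH sn.
case: (lerP a b) => ab.
  exists b; first by rewrite inE bs orbT.
  by move=> x; rewrite inE => /orP[/eqP->|/hb].
exists a; first by rewrite inE eqxx.
move=> x; rewrite inE => /orP[/eqP->//|/hb xb]; apply: le_trans xb (ltW ab).
Qed.

Lemma seq_min (s : seq R) : s != [::] -> exists2 a, a \in s & forall x, x \in s -> a <= x.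
Proof.
elim: s => // a s IH _; case: (eqVneq s [::]) => [->|sn].
  by exists a; rewrite ?mem_seq1 // => x; rewrite mem_seq1 => /eqP ->.
have [b bs hb] := IH sn.
case: (lerP b a) => ab.
  exists b; first by rewrite inE bs orbT.
  by move=> x; rewrite inE => /orP[/eqP->|/hb].
exists a; first by rewrite inE eqxx.
move=> x; rewrite inE => /orP[/eqP->//|/hb xb]; apply: le_trans (ltW ab) xb.
Qed.

Lemma fset_max (X : {fset R}) : X != fset0 -> exists2 a, a \in X & forall x, x \in X -> x <= a.
Proof.
move=> Xn; apply: (seq_max (s := X)).
by apply: contra Xn => /eqP e; apply/eqP/fsetP => x; rewrite inE -[x \in X]/(x \in (X : seq R)) e.
Qed.

Lemma fset_min (X : {fset R}) : X != fset0 -> exists2 a, a \in X & forall x, x \in X -> a <= x.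
Proof.
move=> Xn; apply: (seq_min (s := X)).
by apply: contra Xn => /eqP e; apply/eqP/fsetP => x; rewrite inE -[x \in X]/(x \in (X : seq R)) e.
Qed.

Lemma gain (X Y : {fset R}) e f (h : R -> R) : e \in X -> f \in Y ->
  (forall x y, x \in (X `\ e)%fset -> y \in Y -> x + y != e + f) ->
  (forall z, z \in sumR X Y -> 0 <= h z) ->
  \sum_(z <- sumR (X `\ e)%fset Y) h z + h (e + f) <= \sum_(z <- sumR X Y) h z.
Proof.
move=> eX fY hne h0.
have efS : e + f \in sumR X Y by apply/sumRP; exists e, f.
rewrite [X in _ <= X](big_fsetD1 (e + f)) //= addrC; apply: lerD => //.
apply: sum_sub_le.
  apply/fsubsetP => z /sumRP [x [y [xX yY ->]]]; rewrite in_fsetD1 (hne x y) //=.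
  by apply/sumRP; exists x, y; split => //; move: xX; rewrite in_fsetD1 => /andP[].
by move=> z; rewrite in_fsetD1 => /andP[_ /h0].
Qed.
End OneD2.

Section OneD3.
Variable R : realType.
Variable h : R -> R.

Definition goodw (w w' : R -> R) := [/\ (forall x, 0 <= w x), (forall y, 0 <= w' y) &
  (forall x y, Num.min (w x) (w' y) <= h (x + y))].

Definition concl (X Y : {fset R}) (w w' : R -> R) (m : R) :=
  \sum_(x <- X) Num.min (w x) m + \sum_(y <- Y) Num.min (w' y) m - m <= \sum_(z <- sumR X Y) h z.

Lemma goodw_swap w w' : goodw w w' -> goodw w' w.
Proof. by case=> a b c; split => // x y; rewrite minC addrC. Qed.

Lemma concl_swap (X Y : {fset R}) (w w' : R -> R) m : concl Y X w' w m -> concl X Y w w' m.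
Proof. by rewrite /concl sumRC [X in X - _ <= _]addrC. Qed.

Lemma h_ge0 (X Y : {fset R}) (w w' : R -> R) z : goodw w w' -> z \in sumR X Y -> 0 <= h z.
Proof.
case=> w0 w'0 hh /sumRP [x [y [_ _ ->]]]; apply: le_trans (hh x y).
by rewrite le_min w0 w'0.
Qed.

Lemma removeX (X Y : {fset R}) (w w' : R -> R) (m e f : R) : goodw w w' -> e \in X -> f \in Y ->
  (forall x y, x \in (X `\ e)%fset -> y \in Y -> x + y != e + f) ->
  Num.min (w e) m <= Num.min (w e) (w' f) ->
  concl (X `\ e)%fset Y w w' m -> concl X Y w w' m.
Proof.
move=> gw eX fY hne hm IH; rewrite /concl (big_fsetD1 e) //=.
have G := gain eX fY hne (fun z => @h_ge0 X Y w w' z gw).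
have hef : Num.min (w e) (w' f) <= h (e + f) by case: gw.
move: IH; rewrite /concl => IH.
apply: le_trans G; lra.
Qed.



Definition IHn (n : nat) := forall (X Y : {fset R}) (w w' : R -> R) (m : R),
  (#|` X| + #|` Y| <= n)%N -> goodw w w' -> X != fset0 -> Y != fset0 ->
  (exists2 x, x \in X & m <= w x) -> (exists2 y, y \in Y & m <= w' y) ->
  concl X Y w w' m.

Lemma cardD1 (X : {fset R}) e : e \in X -> #|` X| = (#|` (X `\ e)%fset|).+1.
Proof. by move=> eX; rewrite (cardfsD1 e) eX. Qed.

Lemma neq0_mem (X : {fset R}) x : x \in X -> X != fset0.
Proof. by move=> xX; apply/eqP => e; move: xX; rewrite e inE. Qed.

Lemma step n (X Y : {fset R}) (w w' : R -> R) (m a0 b0 : R) : IHn n ->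
  (#|` X| + #|` Y| <= n.+1)%N -> goodw w w' -> X != fset0 -> Y != fset0 ->
  (exists2 x, x \in X & m <= w x) -> (exists2 y, y \in Y & m <= w' y) ->
  (1 < #|` X|)%N -> a0 \in X -> (forall x, x \in X -> x <= a0) ->
  b0 \in Y -> (forall y, y \in Y -> y <= b0) -> Num.min (w a0) m <= w' b0 ->
  concl X Y w w' m.
Proof.
move=> IH hn gw Xn Yn [xs xsX hxs] [ys ysY hys] X2 a0X ha0 b0Y hb0 hab.
have [a1 a1X ha1] := fset_min Xn.
have [b1 b1Y hb1] := fset_min Yn.
have cX e : e \in X -> (#|` (X `\ e)%fset| + #|` Y| <= n)%N.
  by move=> eX; move: hn; rewrite (cardD1 eX) addSn.
have cY e : e \in Y -> (#|` (Y `\ e)%fset| + #|` X| <= n)%N.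
  by move=> eY; move: hn; rewrite (cardD1 eY) addnS addnC.
case: (pselect (exists2 x, x \in (X `\ a0)%fset & m <= w x)) => [[x xX hx]|nex].
-
  apply: (removeX (e := a0) (f := b0)) => //.
  + move=> x' y; rewrite in_fsetD1 => /andP[xa x'X] yY.
    have : x' < a0 by rewrite lt_neqAle xa ha0.
    have := hb0 _ yY => h1 h2; apply/eqP => h3; lra.
  + by rewrite le_min hab ge_min lexx.
  + apply: IH => //; [exact: cX | exact: neq0_mem xX | by exists x | by exists ys].
-
  have nx x : x \in (X `\ a0)%fset -> w x < m.
    by move=> xX; rewrite ltNge; apply/negP => hx; apply: nex; exists x.
  have xsa0 : xs = a0.
    apply/eqP; apply/negPn/negP => hne.
    have : w xs < m by apply: nx; rewrite in_fsetD1 hne xsX.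
    by rewrite ltNge hxs.
  subst xs.
  have Xa0n : (X `\ a0)%fset != fset0.
    apply/eqP => e; move: X2; rewrite (cardD1 a0X) e cardfs0 //.
  have [x1 x1X _] := fset_min Xa0n.
  have a1a0 : a1 != a0.
    move: x1X; rewrite in_fsetD1 => /andP[x1a0 x1X].
    have := ha1 _ x1X; have := ha0 _ x1X => h1 h2.
    apply/eqP => e; subst a1.
    by move: x1a0; rewrite eq_le h1 h2.
  have a1X' : a1 \in (X `\ a0)%fset by rewrite in_fsetD1 a1a0 a1X.
  have wa1 := nx _ a1X'.
  case: (lerP (w a1) (w' b1)) => hb.
  + apply: (removeX (e := a1) (f := b1)) => //.
    * move=> x' y; rewrite in_fsetD1 => /andP[xa x'X] yY.
      have : a1 < x' by rewrite lt_neqAle eq_sym xa ha1.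
      have := hb1 _ yY => h1 h2; apply/eqP => h3; lra.
    * rewrite le_min ge_min lexx /=; apply: le_trans hb; rewrite ge_min lexx //.
    * have a0X' : a0 \in (X `\ a1)%fset by rewrite in_fsetD1 eq_sym a1a0 a0X.
      apply: IH => //; [exact: (cX _ a1X) | exact: (neq0_mem a0X') | by exists a0 | by exists ys].
  + apply: concl_swap.
    have ysb1 : ys != b1.
      apply/eqP => e; subst ys; lra.
    apply: (removeX (e := b1) (f := a1)) => //.
    * exact: goodw_swap.
    * move=> y x'; rewrite in_fsetD1 => /andP[yb yY] xX.
      have : b1 < y by rewrite lt_neqAle eq_sym yb hb1.
      have := ha1 _ xX => h1 h2; apply/eqP => h3; lra.
    * rewrite le_min ge_min lexx /= ge_min; apply/orP; left; lra.
    * have ysY' : ys \in (Y `\ b1)%fset by rewrite in_fsetD1 ysb1 ysY.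
      apply: IH => //; [exact: (cY _ b1Y) | exact: goodw_swap | exact: (neq0_mem ysY') | by exists ys | by exists a0].
Qed.


Lemma card_gt0 (X : {fset R}) : X != fset0 -> (0 < #|` X|)%N.
Proof. by move=> Xn; rewrite lt0n; apply: contra Xn => /eqP /cardfs0_eq ->. Qed.

Lemma two_elems (X : {fset R}) a b : a \in X -> b \in X -> a != b -> (1 < #|` X|)%N.
Proof.
move=> aX bX ab; rewrite (cardD1 aX) ltnS card_gt0 //.
by apply: (@neq0_mem _ b); rewrite in_fsetD1 eq_sym ab bX.
Qed.

Lemma singl (X : {fset R}) a : a \in X -> (#|` X| <= 1)%N -> X = [fset a]%fset.
Proof.
move=> aX c1; have /cardfs1P [x ex] : #|` X| == 1%N.
  by rewrite eqn_leq c1 card_gt0 // (neq0_mem aX).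
by move: aX; rewrite ex inE => /eqP ->.
Qed.

Lemma oneD n : IHn n.
Proof.
elim: n => [|n IH] X Y w w' m hn gw Xn Yn [xs xsX hxs] [ys ysY hys].
  by move: hn; rewrite leqn0 addn_eq0 => /andP[/eqP/cardfs0_eq e _]; move: Xn; rewrite e eqxx.
have [a0 a0X ha0] := fset_max Xn.
have [b0 b0Y hb0] := fset_max Yn.
case: (boolP ((1 < #|` X|)%N && (Num.min (w a0) m <= w' b0))) => [/andP[c1 c2]|nc1].
  apply: (step IH hn gw Xn Yn _ _ c1 a0X ha0 b0Y hb0 c2); by [exists xs | exists ys].
case: (boolP ((1 < #|` Y|)%N && (Num.min (w' b0) m <= w a0))) => [/andP[c1 c2]|nc2].
  apply: concl_swap; apply: (step IH _ (goodw_swap gw) Yn Xn _ _ c1 b0Y hb0 a0X ha0 c2).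
  - by rewrite addnC.
  - by exists ys.
  - by exists xs.
have HX : (#|` X| <= 1)%N.
  rewrite leqNgt; apply/negP => c1; move: nc1; rewrite c1 /= -ltNge => c2.
  have ysb0 : ys != b0 by apply/eqP => e; subst ys; move: c2; rewrite lt_min => /andP[_]; rewrite ltNge hys.
  have c3 := two_elems ysY b0Y ysb0.
  move: nc2; rewrite c3 /= -ltNge => c4.
  move: c2 c4; rewrite !lt_min => /andP[c2 c2'] /andP[c4 c4']; lra.
have HY : (#|` Y| <= 1)%N.
  rewrite leqNgt; apply/negP => c1; move: nc2; rewrite c1 /= -ltNge => c2.
  have xsa0 : xs != a0 by apply/eqP => e; subst xs; move: c2; rewrite lt_min => /andP[_]; rewrite ltNge hxs.
  have c3 := two_elems xsX a0X xsa0.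
  move: nc1; rewrite c3 /= -ltNge => c4.
  move: c2 c4; rewrite !lt_min => /andP[c2 c2'] /andP[c4 c4']; lra.
have eX := singl xsX HX; have eY := singl ysY HY; subst X Y.
rewrite /concl !big_seq_fset1.
have -> : sumR [fset xs]%fset [fset ys]%fset = [fset (xs + ys)%R]%fset.
  apply/fsetP => z; rewrite inE; apply/sumRP/eqP => [[x [y [+ + ->]]]|->].
    by rewrite !inE => /eqP -> /eqP ->.
  by exists xs, ys; rewrite !inE.
rewrite big_seq_fset1.
case: gw => _ _ hh; have := hh xs ys.
move: hxs hys; rewrite /Num.min; case: ifP; case: ifP; case: ifP; move=> *; lra.
Qed.

End OneD3.


Section Main.
Variables (R : realType) (d : nat).
Implicit Types (I J D : {set 'I_d}) (S X A B : {fset 'rV[R]_d}).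

Definition mask I (x : 'rV[R]_d) : 'rV[R]_d := \row_i (if i \in I then x 0 i else 0).

Definition fN D S : nat := \sum_(I : {set 'I_d} | I \subset D) #|` (mask I @` S)%fset|.

Definition ck (k : 'I_d) (z : R) : 'rV[R]_d := \row_i (if i == k then z else 0).

Lemma maskU1 k J x : k \notin J -> mask (k |: J) x = mask J x + ck k (x 0 k).
Proof.
move=> kJ; apply/rowP => i; rewrite !mxE !inE.
case: eqP => [->|_] /=; first by rewrite (negbTE kJ) add0r.
by rewrite addr0.
Qed.

Lemma card_transl k J X z : k \notin J -> (forall x, x \in X -> x 0 k = z) ->
  #|` (mask (k |: J) @` X)%fset| = #|` (mask J @` X)%fset|.
Proof.
move=> kJ hz.
have -> : (mask (k |: J) @` X)%fset = ((fun y => (y + ck k z)%R) @` (mask J @` X))%fset.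
  apply/fsetP => y; apply/imfsetP/imfsetP => [[x xX ->]|[y' /imfsetP [x xX ->] ->]].
    by exists (mask J x); [apply/imfsetP; exists x | rewrite maskU1 // hz].
  by exists x => //; rewrite maskU1 // hz.
rewrite card_imfset //=; last exact: addIr.
Qed.

Definition slice X k z : {fset 'rV[R]_d} := [fset x : 'rV[R]_d in X | x 0 k == z]%fset.
Definition vals X k : {fset R} := [fset (x : 'rV[R]_d) 0 k | x in X]%fset.

Lemma in_slice X k z x : (x \in slice X k z) = (x \in X) && (x 0 k == z).
Proof. by rewrite /slice !inE. Qed.

Lemma mask_k I x k : k \in I -> mask I x 0 k = x 0 k.
Proof. by move=> kI; rewrite mxE kI. Qed.

Lemma card_partition (M : {fset 'rV[R]_d}) k :
  #|` M| = (\sum_(z <- vals M k) #|` slice M k z|)%N.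
Proof.
rewrite card_fset_sum1 (partition_big_imfset _ (fun y : 'rV[R]_d => y 0 k)).
apply: eq_bigr => z _; rewrite big_fset_condE card_fset_sum1 //.
Qed.

Lemma card_mask_part I X k : k \in I ->
  #|` (mask I @` X)%fset| = (\sum_(z <- vals X k) #|` (mask I @` slice X k z)%fset|)%N.
Proof.
move=> kI; rewrite (card_partition _ k).
have -> : vals (mask I @` X)%fset k = vals X k.
  apply/fsetP => z; apply/imfsetP/imfsetP => [[y /imfsetP [x xX ->] ->]|[x xX ->]].
    by exists x => //; rewrite mask_k.
  by exists (mask I x); [apply/imfsetP; exists x | rewrite mask_k].
apply: eq_bigr => z _; congr #|` _ |.
apply/fsetP => y; rewrite in_slice; apply/andP/imfsetP => [[/imfsetP [x xX ->] /eqP e]|[x]].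
  by exists x => //; rewrite in_slice xX -e mask_k ?eqxx.
rewrite in_slice => /andP[xX /eqP e] ->; split; first by apply/imfsetP; exists x.
by rewrite mask_k // e.
Qed.

Lemma card_fiber k J X : k \notin J ->
  #|` (mask (k |: J) @` X)%fset| = (\sum_(z <- vals X k) #|` (mask J @` slice X k z)%fset|)%N.
Proof.
move=> kJ; rewrite (@card_mask_part _ _ k) ?setU11 //; apply: eq_bigr => z _.
by apply: (@card_transl _ _ _ z) => // x; rewrite in_slice => /andP[_ /eqP].
Qed.

Lemma fN_split k D S : k \in D ->
  fN D S = (fN (D :\ k) S + \sum_(J : {set 'I_d} | J \subset D :\ k) #|` (mask (k |: J) @` S)%fset|)%N.
Proof.
move=> kD; rewrite /fN (bigID (fun I => k \in I)) /= addnC; congr (_ + _)%N.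
  apply: eq_bigl => I; by rewrite subsetD1 andbC.
rewrite (reindex_onto (fun J => k |: J) (fun I => I :\ k)) /=; last first.
  by move=> I /andP[_ kI]; rewrite finset.setD1K.
apply: eq_bigl => J; rewrite finset.setU11 andbT finset.subsetD1 finset.subUset finset.sub1set kD /=.
congr (_ && _); case: (boolP (k \in J)) => kJ /=.
  by apply/negbTE/eqP => e; move: kJ; rewrite -e finset.setD11.
by rewrite finset.setU1K ?eqxx.
Qed.

Lemma fN_split2 k D S : k \in D ->
  fN D S = (fN (D :\ k) S + \sum_(z <- vals S k) fN (D :\ k) (slice S k z))%N.
Proof.
move=> kD; rewrite (fN_split _ kD); congr (_ + _)%N.
rewrite /fN exchange_big /=; apply: eq_bigr => J JD.
apply: card_fiber; apply: contraL JD => kJ.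
by apply/negP => /fintype.subsetP /(_ k kJ); rewrite !inE eqxx.
Qed.

Lemma imfset_sub (f : 'rV[R]_d -> 'rV[R]_d) X Y : (X `<=` Y)%fset -> (f @` X `<=` f @` Y)%fset.
Proof.
move=> /fsubsetP XY; apply/fsubsetP => y /imfsetP [x xX ->]; apply/imfsetP; exists x => //.
exact: XY.
Qed.

Lemma card_mask_mono I X Y : (X `<=` Y)%fset -> (#|` (mask I @` X)%fset| <= #|` (mask I @` Y)%fset|)%N.
Proof. by move=> XY; apply: fsubset_leq_card; apply: imfset_sub. Qed.

Lemma fN_mono D X Y : (X `<=` Y)%fset -> (fN D X <= fN D Y)%N.
Proof. by move=> XY; apply: leq_sum => I _; apply: card_mask_mono. Qed.

Lemma card_mask0 X : X != fset0 -> #|` (mask finset.set0 @` X)%fset| = 1%N.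
Proof.
move=> Xn; apply/eqP/cardfs1P; exists 0; apply/fsetP => y; rewrite inE.
apply/imfsetP/eqP => [[x _ ->]|->].
  by apply/rowP => i; rewrite !mxE inE.
have /fset0Pn [x xX] := Xn.
by exists x => //; apply/rowP => i; rewrite !mxE inE.
Qed.

Lemma fN_ge1 D S : S != fset0 -> (1 <= fN D S)%N.
Proof.
move=> Sn; rewrite /fN (bigD1 finset.set0) ?finset.sub0set //= card_mask0 //.
Qed.

Lemma mask_card_split k D A : k \in D ->
  #|` (mask D @` A)%fset| = (\sum_(a <- vals A k) #|` (mask (D :\ k) @` slice A k a)%fset|)%N.
Proof.
move=> kD; rewrite (@card_mask_part _ _ k) //; apply: eq_bigr => a _.
rewrite -{1}(finset.setD1K kD); apply: (@card_transl _ _ _ a); first by rewrite finset.setD11.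
by move=> x; rewrite in_slice => /andP[_ /eqP].
Qed.

Lemma slice_sub X k z : (slice X k z `<=` X)%fset.
Proof. by apply/fsubsetP => x; rewrite in_slice => /andP[]. Qed.

Lemma slice_neq0 X k z : z \in vals X k -> slice X k z != fset0.
Proof.
move=> /imfsetP [x xX ->]; apply/fset0Pn; exists x; by rewrite in_slice xX eqxx.
Qed.

Lemma sumsetP A B z : reflect (exists a b, [/\ a \in A, b \in B & z = a + b]) (z \in sumset A B).
Proof.
apply: (iffP idP).
  by move=> /imfset2P [x xX [y yY ->]]; exists x, y.
by move=> [x [y [xX yY ->]]]; apply/imfset2P; exists x => //; exists y.
Qed.

Lemma sumset_neq0 A B : A != fset0 -> B != fset0 -> sumset A B != fset0.
Proof.
move=> /fset0Pn [a aA] /fset0Pn [b bB]; apply/fset0Pn; exists (a + b).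
by apply/sumsetP; exists a, b.
Qed.

Lemma vals_sumset A B k : vals (sumset A B) k = sumR (vals A k) (vals B k).
Proof.
apply/fsetP => z; apply/imfsetP/sumRP => [[x /sumsetP [a [b [aA bB ->]]] ->]|].
  exists (a 0 k), (b 0 k); split; rewrite ?mxE //.
  - by apply/imfsetP; exists a.
  - by apply/imfsetP; exists b.
move=> [x [y [/imfsetP [a aA ->] /imfsetP [b bB ->] ->]]].
by exists (a + b); [apply/sumsetP; exists a, b | rewrite mxE].
Qed.

Lemma slice_sumset A B k a b :
  (sumset (slice A k a) (slice B k b) `<=` slice (sumset A B) k (a + b)%R)%fset.
Proof.
apply/fsubsetP => z /sumsetP [x [y [+ + ->]]]; rewrite !in_slice => /andP[xA /eqP xa] /andP[yB /eqP yb].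
by rewrite mxE xa yb eqxx andbT; apply/sumsetP; exists x, y.
Qed.

End Main.


Section Claim.
Variables (R : realType) (d : nat).
Implicit Types (I J D : {set 'I_d}) (S X A B : {fset 'rV[R]_d}).

Lemma card_mask_ge1 I X : X != fset0 -> (1 <= #|` (mask I @` X)%fset|)%N.
Proof.
move=> /fset0Pn [x xX]; rewrite lt0n; apply/negP => /eqP /cardfs0_eq e.
have : mask I x \in (mask I @` X)%fset by apply/imfsetP; exists x.
by rewrite e inE.
Qed.

Lemma root_pow (t : R) n : 0 <= t -> (0 < n)%N -> (t `^ (n%:R^-1)) ^+ n = t.
Proof.
move=> t0 n0; rewrite -powR_mulrn ?powR_ge0 // -powRrM mulVf ?powRr1 //.
by rewrite pnatr_eq0 -lt0n.
Qed.

Definition HypN n D := forall A B, A != fset0 -> B != fset0 -> forall s t : R, 0 <= s -> 0 <= t ->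
  s ^+ n <= (#|` (mask D @` A)%fset|)%:R -> t ^+ n <= (#|` (mask D @` B)%fset|)%:R ->
  (s + t) ^+ n <= (fN D (sumset A B))%:R.

Lemma homog n D : HypN n D -> forall A B, A != fset0 -> B != fset0 -> forall th p q : R,
  0 < th -> th <= 1 -> 0 <= p -> 0 <= q ->
  th * p ^+ n <= (#|` (mask D @` A)%fset|)%:R -> th * q ^+ n <= (#|` (mask D @` B)%fset|)%:R ->
  th * (p + q) ^+ n <= (fN D (sumset A B))%:R.
Proof.
move=> IH A B An Bn th p q th0 th1 p0 q0 hp hq.
case: n IH hp hq => [|n] IH hp hq.
  rewrite expr0 mulr1; apply: le_trans th1 _.
  have := IH A B An Bn 0 0 (lexx _) (lexx _); rewrite !expr0; apply.
    by rewrite ler1n card_mask_ge1.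
  by rewrite ler1n card_mask_ge1.
set r := th `^ (n.+1%:R^-1).
have r0 : 0 <= r by apply: powR_ge0.
have rn : r ^+ n.+1 = th by rewrite root_pow // ltW.
have := IH A B An Bn (r * p) (r * q) (mulr_ge0 r0 p0) (mulr_ge0 r0 q0).
by rewrite -mulrDr !exprMn rn; apply.
Qed.

Lemma seq_argmax (F : R -> R) (s : seq R) : s != [::] -> exists2 a, a \in s & forall x, x \in s -> F x <= F a.
Proof.
elim: s => // a s IH _; case: (eqVneq s [::]) => [->|sn].
  by exists a; rewrite ?mem_seq1 // => x; rewrite mem_seq1 => /eqP ->.
have [b bs hb] := IH sn.
case: (lerP (F a) (F b)) => ab.
  exists b; first by rewrite inE bs orbT.
  by move=> x; rewrite inE => /orP[/eqP->|/hb].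
exists a; first by rewrite inE eqxx.
move=> x; rewrite inE => /orP[/eqP->//|/hb xb]; apply: le_trans xb (ltW ab).
Qed.

Lemma fset_argmax (F : R -> R) (X : {fset R}) : X != fset0 -> exists2 a, a \in X & forall x, x \in X -> F x <= F a.
Proof.
move=> Xn; apply: (seq_argmax F (s := X)).
by apply: contra Xn => /eqP e; apply/eqP/fsetP => x; rewrite inE -[x \in X]/(x \in (X : seq R)) e.
Qed.

Lemma vals_neq0 X k : X != fset0 -> vals X k != fset0.
Proof. by move=> /fset0Pn [x xX]; apply/fset0Pn; exists (x 0 k); apply/imfsetP; exists x. Qed.

Lemma claim n : forall D, #|D| = n -> HypN n D.
Proof.
elim: n => [|n IH] D hD A B An Bn s t s0 t0 hs ht.
  by rewrite expr0 ler1n fN_ge1 // sumset_neq0.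
have /finset.set0Pn [k kD] : D != finset.set0 by rewrite -finset.card_gt0 hD.
set D' := D :\ k.
have hD' : #|D'| = n by move: hD; rewrite (finset.cardsD1 k) kD add1n => -[].
have IHh := homog (IH D' hD').
set VA := vals A k; set VB := vals B k.
have VAn : VA != fset0 by apply: vals_neq0.
have VBn : VB != fset0 by apply: vals_neq0.
set u := fun a => (#|` (mask D' @` slice A k a)%fset|)%:R : R.
set v := fun b => (#|` (mask D' @` slice B k b)%fset|)%:R : R.
have [am amA ham] := fset_argmax u VAn.
have [bm bmB hbm] := fset_argmax v VBn.
set Us := u am; set Vs := v bm.
have u1 a : a \in VA -> 1 <= u a by move=> aA; rewrite /u ler1n card_mask_ge1 // slice_neq0.
have v1 b : b \in VB -> 1 <= v b by move=> bB; rewrite /v ler1n card_mask_ge1 // slice_neq0.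
have Us1 : 1 <= Us by apply: u1.
have Vs1 : 1 <= Vs by apply: v1.
have UsA : Us <= (#|` (mask D' @` A)%fset|)%:R by rewrite ler_nat card_mask_mono // slice_sub.
have VsB : Vs <= (#|` (mask D' @` B)%fset|)%:R by rewrite ler_nat card_mask_mono // slice_sub.
set U := (#|` (mask D @` A)%fset|)%:R : R.
set V := (#|` (mask D @` B)%fset|)%:R : R.
have hU : U = \sum_(a <- VA) u a by rewrite /U (mask_card_split _ kD) natr_sum.
have hV : V = \sum_(b <- VB) v b by rewrite /V (mask_card_split _ kD) natr_sum.
set P := Us `^ (n%:R^-1); set Q := Vs `^ (n%:R^-1).
have hPQ : P ^+ n = Us /\ Q ^+ n = Vs.
  have [n0|n0] := eqVneq n 0%N.
    have e : D' = finset.set0 by apply: finset.cards0_eq; rewrite hD' n0.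
    rewrite n0 !expr0 /Us /Vs /u /v e !card_mask0 //; exact: slice_neq0.
  by rewrite !root_pow ?lt0n //; lra.
case: hPQ => hP hQ.
have P0 : 0 < P by apply: powR_gt0; lra.
have Q0 : 0 < Q by apply: powR_gt0; lra.
set K := (P + Q) ^+ n.
have K0 : 0 < K by apply: exprn_gt0; lra.
have Usn : Us != 0 by rewrite gt_eqF //; lra.
have Vsn : Vs != 0 by rewrite gt_eqF //; lra.
set S := sumset A B.
set h := fun z => (fN D' (slice S k z))%:R : R.
have E1 : (fN D S)%:R = (fN D' S)%:R + \sum_(z <- sumR VA VB) h z.
  by rewrite (fN_split2 _ kD) natrD natr_sum vals_sumset.
have T1 : K <= (fN D' S)%:R.
  have := IHh A B An Bn 1 P Q ltr01 (lexx 1) (ltW P0) (ltW Q0); rewrite !mul1r hP hQ; apply => //.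
set w := fun a => if a \in VA then u a / Us * K else 0.
set w' := fun b => if b \in VB then v b / Vs * K else 0.
have gw : goodw h w w'.
  split.
  - move=> a; rewrite /w; case: ifP => // _; apply: mulr_ge0; last lra.
    by apply: divr_ge0; [rewrite /u ler0n | lra].
  - move=> b; rewrite /w'; case: ifP => // _; apply: mulr_ge0; last lra.
    by apply: divr_ge0; [rewrite /v ler0n | lra].
  - move=> a b; rewrite /w /w'.
    case: (boolP (a \in VA)) => aA; last by rewrite ge_min /h ler0n.
    case: (boolP (b \in VB)) => bB; last by rewrite ge_min /h ler0n orbT.
    have hsub : (fN D' (sumset (slice A k a) (slice B k b)))%:R <= h (a + b).
      by rewrite /h ler_nat fN_mono // slice_sumset.
    apply: le_trans hsub.
    have sAn := slice_neq0 aA; have sBn := slice_neq0 bB.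
    have ua1 := u1 _ aA; have vb1 := v1 _ bB.
    have uaU := ham _ aA; have vbV := hbm _ bB.
    case: (leP (u a / Us) (v b / Vs)) => c.
    + rewrite ge_min; apply/orP; left.
      apply: IHh => //.
      * by apply: divr_gt0; lra.
      * by rewrite ler_pdivrMr ?mul1r //; lra.
      * exact: ltW.
      * exact: ltW.
      * by rewrite hP divfK.
      * rewrite hQ; apply: le_trans (ler_wpM2r (ltW (lt_le_trans ltr01 Vs1)) c) _.
        by rewrite divfK.
    + rewrite ge_min; apply/orP; right.
      apply: IHh => //.
      * by apply: divr_gt0; lra.
      * by rewrite ler_pdivrMr ?mul1r //; lra.
      * exact: ltW.
      * exact: ltW.
      * rewrite hP; apply: le_trans (ler_wpM2r (ltW (lt_le_trans ltr01 Us1)) (ltW c)) _.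
        by rewrite divfK.
      * by rewrite hQ divfK.
have ex1 : exists2 x, x \in VA & K <= w x by exists am; rewrite // /w amA divff ?mul1r.
have ex2 : exists2 x, x \in VB & K <= w' x by exists bm; rewrite // /w' bmB divff ?mul1r.
have C := @oneD R h _ VA VB w w' K (leqnn _) gw VAn VBn ex1 ex2.
rewrite /concl in C.
have SA : \sum_(a <- VA) Num.min (w a) K = U / Us * K.
  rewrite hU !mulr_suml big_seq [in RHS]big_seq; apply: eq_bigr => a aA.
  rewrite /w aA min_l //; rewrite -[X in _ <= X]mul1r ler_wpM2r //; first lra.
  by rewrite ler_pdivrMr ?mul1r ?ham //; lra.
have SB : \sum_(b <- VB) Num.min (w' b) K = V / Vs * K.
  rewrite hV !mulr_suml big_seq [in RHS]big_seq; apply: eq_bigr => b bB.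
  rewrite /w' bB min_l //; rewrite -[X in _ <= X]mul1r ler_wpM2r //; first lra.
  by rewrite ler_pdivrMr ?mul1r ?hbm //; lra.
have main : (U / Us + V / Vs) * K <= (fN D S)%:R.
  rewrite E1 mulrDl; rewrite SA SB in C; lra.
apply: le_trans main; apply: holder2 => //.
  by rewrite hP divfK.
by rewrite hQ divfK.
Qed.

End Claim.


Section Final.
Variables (R : realType) (d : nat) (b : 'M[R]_d).
Hypothesis hb : b \in unitmx.

Lemma card_inj_img (f : 'rV[R]_d -> 'rV[R]_d) (X : {fset 'rV[R]_d}) :
  injective f -> #|` (f @` X)%fset| = #|` X|.
Proof. by move=> fi; rewrite card_imfset. Qed.

Lemma coords_inj : injective (coords b).
Proof. by move=> x y e; rewrite -(mulmxKV hb x) -(mulmxKV hb y); congr (_ *m _); exact: e. Qed.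

Lemma mulb_inj : injective (fun y : 'rV[R]_d => y *m b).
Proof. by move=> x y /= e; rewrite -(mulmxK hb x) -(mulmxK hb y) e. Qed.

Lemma coords_sumset (A B : {fset 'rV[R]_d}) :
  (coords b @` sumset A B)%fset = sumset (coords b @` A)%fset (coords b @` B)%fset.
Proof.
apply/fsetP => z; apply/imfsetP/sumsetP => [[x /sumsetP [a [c [aA cB ->]]] ->]|].
  exists (coords b a), (coords b c); split; rewrite /coords ?mulmxDl //.
  - by apply/imfsetP; exists a.
  - by apply/imfsetP; exists c.
move=> [x [y [/imfsetP [a aA ->] /imfsetP [c cB ->] ->]]].
by exists (a + c); [apply/sumsetP; exists a, c | rewrite /coords mulmxDl].
Qed.

Lemma card_projI I (S : {fset 'rV[R]_d}) :
  #|` (projI b I @` S)%fset| = #|` (mask I @` (coords b @` S))%fset|.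
Proof.
have -> : (projI b I @` S)%fset = ((fun y => y *m b) @` (mask I @` (coords b @` S)))%fset.
  apply/fsetP => y; apply/imfsetP/imfsetP => [[x xS ->]|[y' /imfsetP [x' /imfsetP [x xS ->] ->] ->]].
    exists (mask I (coords b x)) => //; apply/imfsetP; exists (coords b x) => //.
    by apply/imfsetP; exists x.
  by exists x.
by rewrite (card_inj_img _ mulb_inj).
Qed.

Lemma mask_setT (x : 'rV[R]_d) : mask [set: 'I_d]%SET x = x.
Proof. by apply/rowP => i; rewrite !mxE inE. Qed.

End Final.

Lemma root_le (R : realType) (x : R) n : 1 <= x -> (x `^ (n%:R^-1)) ^+ n <= x.
Proof.
move=> x1; case: n => [|n]; first by rewrite expr0.
by rewrite root_pow //; lra.
Qed.

Unset Implicit Arguments.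
Set Strict Implicit.

Theorem lemma2p1 (R : realType) (d : nat) (b : 'M[R]_d)
  (hb : b \in unitmx) (A B : {fset 'rV[R]_d})
  (hA : A != fset0) (hB : B != fset0) :
  (#|` sumset A B|%:R : R) >=
    ((#|` A|%:R) `^ (d%:R^-1) + (#|` B|%:R) `^ (d%:R^-1)) ^+ d
    - \sum_(I : {set 'I_d} | I != [set: 'I_d]%SET) (#|` (projI b I @` sumset A B)%fset|%:R).
Proof.
set A' := (coords b @` A)%fset; set B' := (coords b @` B)%fset.
have cA : #|` (mask [set: 'I_d]%SET @` A')%fset| = #|` A|.
  by rewrite card_inj_img; [apply: card_inj_img; apply: coords_inj | move=> x y; rewrite !mask_setT].
have cB : #|` (mask [set: 'I_d]%SET @` B')%fset| = #|` B|.
  by rewrite card_inj_img; [apply: card_inj_img; apply: coords_inj | move=> x y; rewrite !mask_setT].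
have A'n : A' != fset0.
  by move: hA; apply: contra => /eqP e; rewrite -cardfs_eq0 -(card_inj_img _ (@coords_inj _ _ _ hb)) -/A' e cardfs0.
have B'n : B' != fset0.
  by move: hB; apply: contra => /eqP e; rewrite -cardfs_eq0 -(card_inj_img _ (@coords_inj _ _ _ hb)) -/B' e cardfs0.
have rt (X : {fset 'rV[R]_d}) : X != fset0 -> ((#|` X|%:R : R) `^ (d%:R^-1)) ^+ d <= #|` X|%:R.
  by move=> Xn; apply: root_le; rewrite ler1n lt0n cardfs_eq0.
have hT : #|[set: 'I_d]%SET| = d by rewrite cardsT card_ord.
have C := @claim R d d [set: 'I_d]%SET hT A' B' A'n B'n (#|` A|%:R `^ d%:R^-1) (#|` B|%:R `^ d%:R^-1) (powR_ge0 _ _) (powR_ge0 _ _).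
rewrite cA cB in C; have {}C := C (rt _ hA) (rt _ hB).
rewrite lerBlDr; apply: le_trans C _.
rewrite /fN (bigD1 [set: 'I_d]%SET) ?finset.subsetT //= natrD.
rewrite -coords_sumset (card_inj_img _ (f := mask _)) ?card_inj_img; last 2 first.
  exact: coords_inj.
  by move=> x y; rewrite !mask_setT.
rewrite natr_sum; apply: lerD => //; rewrite le_eqVlt; apply/orP; left; apply/eqP.
apply: eq_big => [I|I _]; first by rewrite finset.subsetT.
by rewrite (card_projI hb).
Qed.
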